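(* Let $n\ge 3$ and let $CH_n$ be the closed Helm graph. Then $$\chi^+(CH_n)=\begin{cases}5n+1 & \text{if } n \text{ is even},\\ 7n-2 & \text{if } n \text{ is odd}.\end{cases}$$
   Context: The closed Helm graph $CH_n$ has vertices $v, v_1,\dots,v_n,u_1,\dots,u_n$; $v_1\dots v_n$ form a cycle, $u_1\dots u_n$ form a cycle (in this order), $v$ is adjacent to every $v_i$, and $u_i$ is adjacent to $v_i$ for each $i$ (i.e. the Helm graph with its pendant vertices joined into an outer cycle). For a proper colouring $c:V(G)\to\{1,\dots,k\}$ (colour $c_i$ identified with $i$), the colouring sum is $\sum_{i=1}^k i\,\theta(c_i)=\sum_v c(v)$, $\theta(c_i)$ the number of vertices of colour $c_i$. The $\chi^+$-chromatic sum $\chi^+(G)$ is the maximum colouring sum over all proper colourings $c:V(G)\to\{1,\dots,\chi(G)\}$, $\chi(G)$ the chromatic number. *)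

(* Defs.v *)
From mathcomp Require Import all_boot.
Set Implicit Arguments. Unset Strict Implicit. Unset Printing Implicit Defensive.

Section Colouring.
Variable T : finType.
Variable e : rel T.

(* c is a proper colouring with colours 'I_k (colour j stands for colour j+1) *)
Definition proper_colouring (k : nat) (c : {ffun T -> 'I_k}) : bool :=
  [forall x, forall y, e x y ==> (c x != c y)].

Definition colourable (k : nat) : bool :=
  [exists c : {ffun T -> 'I_k}, proper_colouring c].

(* chromatic number: least k (searched in 0..#|T|) with a proper k-colouring;
   for a loopless graph #|T| colours always suffice, so this is the minimum. *)
Definition chromatic_number : nat := find colourable (iota 0 #|T|.+1).

Definition colouring_sum (k : nat) (c : {ffun T -> 'I_k}) : nat :=
  \sum_(x : T) (c x).+1.

Definition chi_plus : nat :=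
  \max_(c : {ffun T -> 'I_chromatic_number} | proper_colouring c)
     colouring_sum c.
End Colouring.

(* Closed Helm graph CH_n.
   None = hub v, Some (inl i) = v_{i+1}, Some (inr i) = u_{i+1}. *)
Definition helm_vertex (n : nat) : finType := option ('I_n + 'I_n)%type.

Definition cyc_adj (n : nat) (i j : 'I_n) : bool :=
  (j == i.+1 %% n :> nat) || (i == j.+1 %% n :> nat).

Definition helm_adj (n : nat) : rel (helm_vertex n) :=
  fun x y =>
    match x, y with
    | None, Some (inl _) => true
    | Some (inl _), None => true
    | Some (inl i), Some (inl j) => cyc_adj i j
    | Some (inr i), Some (inr j) => cyc_adj i j
    | Some (inl i), Some (inr j) => i == j
    | Some (inr i), Some (inl j) => i == j
    | _, _ => false
    end.

(* Main.v *)
Require Import Defs.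
From mathcomp Require Import all_boot zify.
Set Implicit Arguments. Unset Strict Implicit. Unset Printing Implicit Defensive.

Lemma card_indep n (f : 'I_n -> nat) a : (forall i, f i != f (ordS i)) ->
  2 * #|[set i | f i == a]| <= n.
Proof.
move=> Hf; set A := [set i | f i == a].
have I0 : A :&: (@ordS n) @: A = set0.
  apply/setP => i; rewrite !inE; apply/negP => /andP[] /eqP fi.
  case/imsetP => j; rewrite inE => /eqP fj ei.
  by move: (Hf j); rewrite -ei fi fj eqxx.
have := cardsU A ((@ordS n) @: A).
rewrite (card_imset _ (@ordS_inj n)) I0 cards0.
have le1 : #|A :|: (@ordS n) @: A| <= n by rewrite -[X in _ <= X]card_ord; apply: max_card.
move=> e1.
lia.
Qed.

Lemma two_col_odd n (f : 'I_n -> nat) a b : odd n -> (forall i, f i != f (ordS i)) ->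
  ~ (forall i, (f i == a) || (f i == b)).
Proof.
case: n f => [|n] f //= On Hf H.
have key : forall k, k < n.+1 -> (f (inord k) == f (inord 0)) = ~~ odd k.
  elim=> [|k IH] lt; first by rewrite eqxx.
  have ne : f (inord k) != f (inord k.+1).
    have -> : (inord k.+1 : 'I_n.+1) = ordS (inord k).
      by apply/val_inj; rewrite /= !inordK ?modn_small //; lia.
    exact: Hf.
  have := IH (ltnW lt); rewrite /= => e.
  move: ne e (H (inord k)) (H (inord k.+1)) (H (inord 0)).
  move: (f (inord k)) (f (inord k.+1)) (f (inord 0)) => x y z.
  case: (odd k) => /= nxy exz Hx Hy Hz.
  - apply/eqP; move: nxy exz Hx Hy Hz; lia.
  - apply/negbTE; move: nxy exz Hx Hy Hz; lia.
have := key n (ltnSn n).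
have -> : ~~ odd n by move: On; case: (odd n).
have := Hf (inord n).
have -> : ordS (inord n : 'I_n.+1) = inord 0.
  by apply/val_inj; rewrite /= !inordK ?modnn //.
by move=> /negbTE ->.
Qed.

Lemma sum_card n (f : 'I_n -> nat) a :
  \sum_i (f i == a) = #|[set i | f i == a]|.
Proof. rewrite -sum1_card [RHS]big_mkcond /=; apply: eq_bigr => i _; by rewrite inE; case: (f i == a). Qed.

Lemma sum_bound n (f : 'I_n -> nat) a b :
  (forall i, f i <= a) -> (forall i, f i != a -> f i <= b) -> b <= a ->
  \sum_i f i <= n*b + (a-b) * #|[set i | f i == a]|.
Proof.
move=> Ha Hb ba.
apply: (@leq_trans (\sum_i (b + (a-b) * (f i == a)))).
  apply: leq_sum => i _; case: eqP => [->|/eqP ne]; first by rewrite muln1 subnKC.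
  by rewrite muln0 addn0 Hb.
by rewrite big_split /= sum_nat_const card_ord -big_distrr /= sum_card mulnC.
Qed.

Lemma sum_bound_odd n (f : 'I_n -> nat) a b c : odd n ->
  (forall i, f i != f (ordS i)) ->
  (forall i, f i <= a) -> (forall i, f i != a -> f i <= b) ->
  (forall i, f i != a -> f i != b -> f i <= c) -> c <= b -> b <= a ->
  \sum_i f i + b <= n*b + (a-b) * #|[set i | f i == a]| + c.
Proof.
move=> On Hf Ha Hb Hc cb ba.
case: (boolP [forall i, (f i == a) || (f i == b)]) => [/forallP H | /forallPn [j Hj]].
  by case: (two_col_odd On Hf H).
have [fja fjb] : f j != a /\ f j != b by move: Hj; case: (f j == a); case: (f j == b).
apply: (@leq_trans (\sum_i (b + (a-b) * (f i == a)) + c)); last first.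
  by rewrite big_split /= sum_nat_const card_ord -big_distrr /= sum_card mulnC.
rewrite (bigD1 j) //= [X in _ <= X + _](bigD1 j) //= (negbTE fja) muln0 addn0.
set S := \sum_(i < n | i != j) f i.
set S' := \sum_(i < n | i != j) _.
have : S <= S'.
  apply: leq_sum => i _; case: eqP => [->|/eqP ne]; first by rewrite muln1 subnKC.
  by rewrite muln0 addn0 Hb.
have := Hc j fja fjb.
lia.
Qed.

Lemma sum_option (T:finType) (F : option T -> nat) : \sum_x F x = F None + \sum_y F (Some y).
Proof. rewrite (bigD1 None) //=; congr (_ + _).
rewrite (reindex_omap Some id) /=; last by case.
by apply: eq_bigl => y; rewrite eqxx.
Qed.

Lemma helm_sum n k (c : {ffun helm_vertex n -> 'I_k}) : colouring_sum c =
  (c None : nat) + \sum_i (c (Some (inl i)) : nat) + \sum_i (c (Some (inr i)) : nat) + (2*n+1).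
Proof.
rewrite /colouring_sum (eq_bigr (fun x => (c x : nat) + 1)); last by move=> *; rewrite addn1.
rewrite big_split /= sum_nat_const card_option card_sum card_ord muln1.
rewrite sum_option big_sumType /=; lia.
Qed.

Lemma proper_adj (T : finType) (e : rel T) k (c : {ffun T -> 'I_k}) x y :
  proper_colouring e c -> e x y -> (c x : nat) != c y.
Proof. by move=> /forallP/(_ x)/forallP/(_ y)/implyP H /H. Qed.

Lemma adj_hub n (i : 'I_n) : helm_adj None (Some (inl i)). Proof. by []. Qed.
Lemma adj_v n (i : 'I_n) : helm_adj (Some (inl i)) (Some (inl (ordS i))).
Proof. by rewrite /= /cyc_adj eqxx. Qed.
Lemma adj_u n (i : 'I_n) : helm_adj (Some (inr i)) (Some (inr (ordS i))).
Proof. by rewrite /= /cyc_adj eqxx. Qed.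
Lemma adj_vu n (i : 'I_n) : helm_adj (Some (inl i)) (Some (inr i)).
Proof. by rewrite /= eqxx. Qed.

Lemma odd_bound n (c : {ffun helm_vertex n -> 'I_4}) : odd n -> 3 <= n ->
  proper_colouring (@helm_adj n) c -> colouring_sum c <= 7 * n - 2.
Proof.
move=> On n3 Pc; rewrite helm_sum.
set h := (c None : nat).
pose fv := fun i => (c (Some (inl i)) : nat).
pose fu := fun i => (c (Some (inr i)) : nat).
rewrite (_ : \sum_i (c (Some (inl i)) : nat) = \sum_i fv i) //.
rewrite (_ : \sum_i (c (Some (inr i)) : nat) = \sum_i fu i) //.
have Hv : forall i, fv i != fv (ordS i) by move=> i; exact: proper_adj Pc (adj_v i).
have Hu : forall i, fu i != fu (ordS i) by move=> i; exact: proper_adj Pc (adj_u i).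
have Hh : forall i, fv i != h by move=> i; rewrite eq_sym; exact: proper_adj Pc (adj_hub i).
have Lv : forall i, fv i < 4 by move=> i; exact: ltn_ord.
have Lu : forall i, fu i < 4 by move=> i; exact: ltn_ord.
have Lh : h < 4 by exact: ltn_ord.
have Cu := card_indep 3 Hu.
have Bu := @sum_bound_odd n fu 3 2 1 On Hu (fun i => ltnSE (Lu i)).
have [m em] : exists m, n = m.*2.+1 by exists n./2; rewrite -[LHS]odd_double_half On.
have Cv3 := card_indep 3 Hv.
have Cv2 := card_indep 2 Hv.
have {}Bu : \sum_i fu i + 2 <= n * 2 + 1 * #|[set i | fu i == 3]| + 1.
  apply: Bu => // i; have := Lu i; lia.
have : h = 0 \/ h = 1 \/ h = 2 \/ h = 3 by lia.
case=> [eh|[eh|[eh|eh]]].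
- have Bv : \sum_i fv i + 2 <= n * 2 + 1 * #|[set i | fv i == 3]| + 1.
    apply: (@sum_bound_odd n fv 3 2 1) => // i; have := Lv i; lia.
  rewrite -/h eh; lia.
- have Bv : \sum_i fv i + 2 <= n * 2 + 1 * #|[set i | fv i == 3]| + 0.
    apply: (@sum_bound_odd n fv 3 2 0) => // i; have := Lv i; have := Hh i; lia.
  rewrite -/h eh; lia.
- have Bv : \sum_i fv i + 1 <= n * 1 + 2 * #|[set i | fv i == 3]| + 0.
    apply: (@sum_bound_odd n fv 3 1 0) => // i; have := Lv i; have := Hh i; lia.
  rewrite -/h eh; lia.
- have Bv : \sum_i fv i + 1 <= n * 1 + 1 * #|[set i | fv i == 2]| + 0.
    apply: (@sum_bound_odd n fv 2 1 0) => // i; have := Lv i; have := Hh i; lia.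
  rewrite -/h eh; lia.
Qed.

Lemma even_bound n (c : {ffun helm_vertex n -> 'I_3}) : 3 <= n ->
  proper_colouring (@helm_adj n) c -> colouring_sum c <= 5 * n + 1.
Proof.
move=> n3 Pc; rewrite helm_sum.
set h := (c None : nat).
pose fv := fun i => (c (Some (inl i)) : nat).
pose fu := fun i => (c (Some (inr i)) : nat).
rewrite (_ : \sum_i (c (Some (inl i)) : nat) = \sum_i fv i) //.
rewrite (_ : \sum_i (c (Some (inr i)) : nat) = \sum_i fu i) //.
have Hv : forall i, fv i != fv (ordS i) by move=> i; exact: proper_adj Pc (adj_v i).
have Hu : forall i, fu i != fu (ordS i) by move=> i; exact: proper_adj Pc (adj_u i).
have Hh : forall i, fv i != h by move=> i; rewrite eq_sym; exact: proper_adj Pc (adj_hub i).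
have Lv : forall i, fv i < 3 by move=> i; exact: ltn_ord.
have Lu : forall i, fu i < 3 by move=> i; exact: ltn_ord.
have Lh : h < 3 by exact: ltn_ord.
have Cu := card_indep 2 Hu.
have Cv2 := card_indep 2 Hv.
have Cv1 := card_indep 1 Hv.
have Bu : \sum_i fu i <= n * 1 + 1 * #|[set i | fu i == 2]|.
  apply: (@sum_bound n fu 2 1) => // i; have := Lu i; lia.
have : h = 0 \/ h = 1 \/ h = 2 by lia.
case=> [eh|[eh|eh]].
- have Bv : \sum_i fv i <= n * 1 + 1 * #|[set i | fv i == 2]|.
    apply: (@sum_bound n fv 2 1) => // i; have := Lv i; lia.
  rewrite -/h eh; lia.
- have Bv : \sum_i fv i <= n * 0 + 2 * #|[set i | fv i == 2]|.
    apply: (@sum_bound n fv 2 0) => // i; have := Lv i; have := Hh i; lia.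
  rewrite -/h eh; lia.
- have Bv : \sum_i fv i <= n * 0 + 1 * #|[set i | fv i == 1]|.
    apply: (@sum_bound n fv 1 0) => // i; have := Lv i; have := Hh i; lia.
  rewrite -/h eh; lia.
Qed.

Definition gve (i : nat) := if odd i then 1 else 2.
Definition gue (i : nat) := if odd i then 2 else 1.
Definition gvo n (i : nat) := if i == n.-1 then 1 else if odd i then 2 else 3.
Definition guo (i : nat) := if i == 0 then 1 else if odd i then 3 else 2.

Lemma cyc_cases n (i j : 'I_n) (P : nat -> nat -> Prop) :
  (forall x y, P x y -> P y x) ->
  (forall x y, x < n -> y = x.+1 %% n -> P x y) -> cyc_adj i j -> P i j.
Proof.
move=> sym H /orP[/eqP e|/eqP e]; first exact: H.
by apply: sym; apply: H.
Qed.

Lemma mod_step n x y : x < n -> y = x.+1 %% n -> (y = x.+1 /\ x.+1 < n) \/ (x = n.-1 /\ y = 0).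
Proof.
move=> lt e; case: (ltnP x.+1 n) => h.
  by left; rewrite e modn_small.
have ex : x.+1 = n by lia.
by right; split; [lia | rewrite e ex modnn].
Qed.

Lemma gve_ne n x y : ~~ odd n -> x < n -> y = x.+1 %% n -> gve x != gve y.
Proof.
move=> En lt /(mod_step lt) [[-> _]|[ex ->]]; rewrite /gve /= ?oddS; first by case: (odd x).
rewrite ex; case: n En lt ex => [//|m] /= En _ _; rewrite negbK in En; by rewrite En.
Qed.

Lemma gue_ne n x y : ~~ odd n -> x < n -> y = x.+1 %% n -> gue x != gue y.
Proof.
move=> En lt /(mod_step lt) [[-> _]|[ex ->]]; rewrite /gue /= ?oddS; first by case: (odd x).
rewrite ex; case: n En lt ex => [//|m] /= En _ _; rewrite negbK in En; by rewrite En.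
Qed.

Lemma gvo_ne n x y : odd n -> 3 <= n -> x < n -> y = x.+1 %% n -> gvo n x != gvo n y.
Proof.
move=> On n3 lt /(mod_step lt) [[-> lt2]|[ex ->]]; rewrite /gvo /= ?oddS.
  by apply/eqP; case: (odd x) => /=; case: ifP => H1; case: ifP => H2; lia.
by apply/eqP; rewrite ex eqxx; case: ifP => H1; lia.
Qed.

Lemma guo_ne n x y : odd n -> 3 <= n -> x < n -> y = x.+1 %% n -> guo x != guo y.
Proof.
move=> On n3 lt /(mod_step lt) [[-> lt2]|[ex ->]]; rewrite /guo /= ?oddS.
  by apply/eqP; case: (odd x) => /=; case: ifP => H1; lia.
rewrite ex; case: n On n3 lt ex => [//|m] /= On n3 _ _.
by rewrite (negbTE On); case: ifP => // /eqP; lia.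
Qed.

Definition ge n (x : helm_vertex n) : nat :=
  match x with None => 0 | Some (inl i) => gve i | Some (inr i) => gue i end.
Definition go n (x : helm_vertex n) : nat :=
  match x with None => 0 | Some (inl i) => gvo n i | Some (inr i) => guo i end.

Lemma ge_proper n : ~~ odd n -> forall x y : helm_vertex n, helm_adj x y -> ge x != ge y.
Proof.
move=> En [[i|i]|] [[j|j]|] //=.
- apply: (cyc_cases (P := fun x y => gve x != gve y)) => [x y|x y]; first by rewrite eq_sym.
  exact: gve_ne.
- by move/eqP ->; rewrite /gve /gue; case: (odd j).
- by rewrite /gve; case: (odd i).
- by move/eqP ->; rewrite /gve /gue; case: (odd j).
- apply: (cyc_cases (P := fun x y => gue x != gue y)) => [x y|x y]; first by rewrite eq_sym.
  exact: gue_ne.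
- by rewrite /gve; case: (odd j).
Qed.

Lemma odd_pred n : odd n -> ~~ odd n.-1.
Proof. by case: n => [//|m] /=. Qed.

Lemma gvo_guo n x : odd n -> 3 <= n -> gvo n x != guo x.
Proof.
move=> On n3; rewrite /gvo /guo; case: (eqVneq x n.-1) => [->|ne].
  rewrite (negbTE (odd_pred On)) (_ : (n.-1 == 0) = false) //.
  by apply/negbTE/eqP; lia.
by case: (x == 0); case: (odd x).
Qed.

Lemma gvo_ne0 n x : gvo n x != 0.
Proof. by rewrite /gvo; case: (x == n.-1); case: (odd x). Qed.

Lemma go_proper n : odd n -> 3 <= n -> forall x y : helm_vertex n, helm_adj x y -> go x != go y.
Proof.
move=> On n3 [[i|i]|] [[j|j]|] //=.
- apply: (cyc_cases (P := fun x y => gvo n x != gvo n y)) => [x y|x y]; first by rewrite eq_sym.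
  exact: gvo_ne.
- by move/eqP ->; exact: gvo_guo.
- by move=> _; exact: gvo_ne0.
- by move/eqP ->; rewrite eq_sym; exact: gvo_guo.
- apply: (cyc_cases (P := fun x y => guo x != guo y)) => [x y|x y]; first by rewrite eq_sym.
  exact: guo_ne.
- by move=> _; rewrite eq_sym; exact: gvo_ne0.
Qed.

Lemma sum_eqk n k : k < n -> \sum_(i < n) ((i : nat) == k) = 1.
Proof.
move=> lt; rewrite (bigD1 (Ordinal lt)) //= eqxx big1 // => i ne.
apply/eqP; rewrite eqb0; apply: contra ne => /eqP e; by apply/eqP/val_inj.
Qed.

Lemma inord_val k (m : nat) : m <= k -> ((inord m : 'I_k.+1) : nat) = m.
Proof. by move=> h; rewrite inordK. Qed.

Definition ce n : {ffun helm_vertex n -> 'I_3} := [ffun x => inord (ge x)].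
Definition co n : {ffun helm_vertex n -> 'I_4} := [ffun x => inord (go x)].

Lemma ge_le2 n (x : helm_vertex n) : ge x <= 2.
Proof. by case: x => [[i|i]|] //=; rewrite /gve /gue; case: (odd i). Qed.
Lemma go_le3 n (x : helm_vertex n) : go x <= 3.
Proof. by case: x => [[i|i]|] //=; rewrite /gvo /guo; case: ifP; case: (odd i). Qed.

Lemma ce_proper n : ~~ odd n -> proper_colouring (@helm_adj n) (ce n).
Proof.
move=> En; apply/forallP => x; apply/forallP => y; apply/implyP => H.
rewrite !ffunE -val_eqE /= !inord_val ?ge_le2 //; exact: ge_proper.
Qed.

Lemma co_proper n : odd n -> 3 <= n -> proper_colouring (@helm_adj n) (co n).
Proof.
move=> On n3; apply/forallP => x; apply/forallP => y; apply/implyP => H.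
rewrite !ffunE -val_eqE /= !inord_val ?go_le3 //; exact: go_proper.
Qed.

Lemma ce_sum n : colouring_sum (ce n) = 5 * n + 1.
Proof.
rewrite helm_sum !ffunE inord_val //=.
under eq_bigr do rewrite ffunE inord_val ?(ge_le2 (Some (inl _))) //.
under [X in _ + X + _]eq_bigr do rewrite ffunE inord_val ?(ge_le2 (Some (inr _))) //.
rewrite /= -big_split /= (eq_bigr (fun _ => 3)); last by move=> i _; rewrite /gve /gue; case: (odd i).
rewrite sum_nat_const card_ord; lia.
Qed.

Lemma co_sum n : odd n -> 3 <= n -> colouring_sum (co n) = 7 * n - 2.
Proof.
move=> On n3.
rewrite helm_sum !ffunE inord_val //=.
under eq_bigr do rewrite ffunE inord_val ?(go_le3 (Some (inl _))) //.
under [X in _ + X + _]eq_bigr do rewrite ffunE inord_val ?(go_le3 (Some (inr _))) //.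
rewrite /= -big_split /=.
have E : \sum_(i < n) (gvo n i + guo i) + (\sum_(i < n) ((i:nat) == 0) + 2 * \sum_(i < n) ((i:nat) == n.-1)) = \sum_(i < n) 5.
  rewrite big_distrr -!big_split /=; apply: eq_bigr => i _.
  rewrite /gvo /guo; have := ltn_ord i; have := odd_pred On.
  case: (eqVneq (i:nat) n.-1) => [->|ne]; first by move=> /negbTE ->; case: eqP; lia.
  by case: eqP => [->|_]; case: (odd i) => //=; lia.
rewrite !sum_eqk ?sum_nat_const ?card_ord in E; [ move: E; set S := \sum_(i < n) _; lia | lia | lia].
Qed.

Lemma not_col_small n k : 3 <= n -> k < 3 -> ~~ colourable (@helm_adj n) k.
Proof.
move=> n3 k3; apply/existsP => [[c Pc]].
have l0 : 0 < n by lia.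
have l1 : 1 < n by lia.
have a1 := proper_adj Pc (adj_hub (Ordinal l0)).
have a2 := proper_adj Pc (adj_hub (Ordinal l1)).
have a3 : helm_adj (Some (inl (Ordinal l0))) (Some (inl (Ordinal l1))).
  by rewrite /= /cyc_adj /= modn_small.
have a4 := proper_adj Pc a3.
move: a1 a2 a4 (ltn_ord (c None)) (ltn_ord (c (Some (inl (Ordinal l0)))))
  (ltn_ord (c (Some (inl (Ordinal l1))))).
move: (c None : nat) (c (Some (inl (Ordinal l0))) : nat) (c (Some (inl (Ordinal l1))) : nat) => x y z; lia.
Qed.

Lemma not_col3_odd n : odd n -> 3 <= n -> ~~ colourable (@helm_adj n) 3.
Proof.
move=> On n3; apply/existsP => [[c Pc]].
pose fv := fun i => (c (Some (inl i)) : nat).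
have Hv : forall i, fv i != fv (ordS i) by move=> i; exact: proper_adj Pc (adj_v i).
have Hh : forall i, fv i != c None by move=> i; rewrite eq_sym; exact: proper_adj Pc (adj_hub i).
have Lv : forall i, fv i < 3 by move=> i; exact: ltn_ord.
have Lh := ltn_ord (c None).
have : (c None : nat) = 0 \/ (c None : nat) = 1 \/ (c None : nat) = 2 by lia.
case=> [eh|[eh|eh]].
- by apply: (two_col_odd (a := 1) (b := 2) On Hv) => i; move: (Hh i) (Lv i); rewrite eh; lia.
- by apply: (two_col_odd (a := 0) (b := 2) On Hv) => i; move: (Hh i) (Lv i); rewrite eh; lia.
- by apply: (two_col_odd (a := 0) (b := 1) On Hv) => i; move: (Hh i) (Lv i); rewrite eh; lia.
Qed.

Lemma chrom_even n : ~~ odd n -> 3 <= n -> chromatic_number (@helm_adj n) = 3.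
Proof.
move=> En n3; rewrite /chromatic_number card_option card_sum card_ord.
rewrite (_ : (1 + (n + n)).+1 = 4 + (n + n - 2)); last lia.
rewrite iotaD find_cat /=.
rewrite (negbTE (not_col_small (k:=0) n3 isT)) (negbTE (not_col_small (k:=1) n3 isT)) (negbTE (not_col_small (k:=2) n3 isT)).
have -> : colourable (@helm_adj n) 3 by apply/existsP; exists (ce n); exact: ce_proper.
by [].
Qed.

Lemma chrom_odd n : odd n -> 3 <= n -> chromatic_number (@helm_adj n) = 4.
Proof.
move=> On n3; rewrite /chromatic_number card_option card_sum card_ord.
rewrite (_ : (1 + (n + n)).+1 = 5 + (n + n - 3)); last lia.
rewrite iotaD find_cat /=.
rewrite (negbTE (not_col_small (k:=0) n3 isT)) (negbTE (not_col_small (k:=1) n3 isT)) (negbTE (not_col_small (k:=2) n3 isT)) (negbTE (not_col3_odd On n3)).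
have -> : colourable (@helm_adj n) 4 by apply/existsP; exists (co n); exact: co_proper.
by [].
Qed.

Lemma chi_plus_eq (T : finType) (e : rel T) k N : chromatic_number e = k ->
  (forall c : {ffun T -> 'I_k}, proper_colouring e c -> colouring_sum c <= N) ->
  (exists2 c : {ffun T -> 'I_k}, proper_colouring e c & colouring_sum c = N) ->
  chi_plus e = N.
Proof.
rewrite /chi_plus => -> Hle [c Pc Ec]; apply/eqP; rewrite eqn_leq; apply/andP; split.
  by apply/bigmax_leqP.
by rewrite -Ec; apply: (leq_bigmax_cond (F := fun c => colouring_sum c)).
Qed.

Theorem theorem2p10 (n : nat) (hn : 3 <= n) :
  chi_plus (@helm_adj n) = (if odd n then 7 * n - 2 else 5 * n + 1).
Proof.
case: ifP => On.
  apply: chi_plus_eq (chrom_odd On hn) _ _.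
    by move=> c Pc; apply: odd_bound.
  by exists (co n); [exact: co_proper | exact: co_sum].
apply: chi_plus_eq (chrom_even (negbT On) hn) _ _.
  by move=> c Pc; apply: even_bound.
by exists (ce n); [exact: ce_proper (negbT On) | exact: ce_sum].
Qed.
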